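(* Let $V$ be a preference profile over a finite candidate set $C$ with a fixed tie-breaking order, and let $w$ be the 2-Approval winner at $V$. Then all Type 2 manipulators at $V$ (GS-manipulators $i$ with $w\in\mathrm{top}_2(v_i)$) have the same two top-ranked candidates in the same order; in particular they all manipulate in favour of the same candidate.
   Context: Each voter $i$ has a strict linear order $v_i$ over $C$; $\mathrm{top}_2(v)$ is the set of the two highest-ranked candidates of $v$. 2-Approval: each candidate gets one point from each voter ranking her among his top two; the highest score wins, ties broken in favour of the candidate highest in the fixed strict linear order on $C$. Write $\mathcal{R}$ for this rule and $(V_{-i},v_i')$ for $V$ with $v_i$ replaced by $v_i'$. A GS-manipulation of voter $i$ at $V$ is a vote $v_i'$ such that $i$ strictly prefers $\mathcal{R}(V_{-i},v_i')$ to $\mathcal{R}(V)$ and for every vote $v_i''$ either $\mathcal{R}(V_{-i},v_i'')=\mathcal{R}(V_{-i},v_i')$ or $i$ strictly prefers $\mathcal{R}(V_{-i},v_i')$ to $\mathcal{R}(V_{-i},v_i'')$; it is in favour of $\mathcal{R}(V_{-i},v_i')$; $i$ is a GS-manipulator if he has one. *)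

(* Defs.v *)
From mathcomp Require Import all_boot.
Set Implicit Arguments. Unset Strict Implicit. Unset Printing Implicit Defensive.

Section Voting.
Variable C : finType.

(* A strict linear order on C: [v a b] means "a is ranked above b". *)
Definition strict_linear (v : rel C) : Prop :=
  [/\ forall a, ~~ v a a,
      forall a b c, v a b -> v b c -> v a c &
      forall a b, a != b -> v a b || v b a].

(* position of c in v (0 = top) *)
Definition rank (v : rel C) (c : C) : nat := #|[set d | v d c]|.

Definition top2 (v : rel C) : {set C} := [set c | rank v c < 2].

Variable n : nat.
Definition profile := 'I_n -> rel C.

Definition upd (V : profile) (i : 'I_n) (v : rel C) : profile :=
  fun j => if j == i then v else V j.

Definition score (V : profile) (c : C) : nat := #|[set j : 'I_n | c \in top2 (V j)]|.

Definition beats (t : rel C) (V : profile) (w c : C) : bool :=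
  (score V c < score V w) || ((score V c == score V w) && t w c).

(* The 2-Approval winner (always [Some _] when C is nonempty and t is a strict
   linear order; [None] only when C is empty). *)
Definition R2 (t : rel C) (V : profile) : option C :=
  [pick w | [forall c, (c != w) ==> beats t V w c]].

Definition prefers (v : rel C) (a b : option C) : bool :=
  match a, b with Some x, Some y => v x y | _, _ => false end.

Definition GS_manipulation (t : rel C) (V : profile) (i : 'I_n) (v' : rel C) : Prop :=
  [/\ strict_linear v',
      prefers (V i) (R2 t (upd V i v')) (R2 t V) &
      forall v'', strict_linear v'' ->
        R2 t (upd V i v'') = R2 t (upd V i v') \/
        prefers (V i) (R2 t (upd V i v')) (R2 t (upd V i v''))].

Definition GS_manipulator (t : rel C) (V : profile) (i : 'I_n) : Prop :=
  exists v', GS_manipulation t V i v'.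

Definition type2_manipulator (t : rel C) (V : profile) (i : 'I_n) : Prop :=
  GS_manipulator t V i /\ exists w, R2 t V = Some w /\ w \in top2 (V i).

End Voting.

(* Main.v *)
Require Import Defs.
From mathcomp Require Import all_boot.
From mathcomp Require Import zify.
Set Implicit Arguments. Unset Strict Implicit.

Section Aux.
Variable C : finType.
Variable n : nat.

Lemma rank_lt (v : rel C) x y : strict_linear v -> v x y -> rank v x < rank v y.
Proof.
case=> irr tr _ Hxy; rewrite /rank; apply: proper_card; apply/properP; split.
  by apply/subsetP => d; rewrite !inE => Hd; exact: tr Hd Hxy.
by exists x; rewrite !inE ?Hxy ?(negbTE (irr x)).
Qed.

Lemma rank_inj (v : rel C) x y : strict_linear v -> rank v x = rank v y -> x = y.
Proof.
move=> sl E; case: (eqVneq x y) => // Hne.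
have [irr tr tot] := sl; case/orP: (tot _ _ Hne) => H.
  by have := rank_lt sl H; rewrite E ltnn.
by have := rank_lt sl H; rewrite E ltnn.
Qed.

Lemma R2_beats (t : rel C) (V : profile C n) x c :
  R2 t V = Some x -> c != x -> beats t V x c.
Proof.
rewrite /R2; case: pickP => // y Hy [<-] Hc.
by move/forallP: Hy => /(_ c) /implyP; apply.
Qed.

Lemma score_out (V : profile C n) i v c : c \notin top2 (V i) ->
  score V c <= score (upd V i v) c.
Proof.
move=> Hc; rewrite /score; apply: subset_leq_card; apply/subsetP => j.
rewrite !inE /upd; case: eqP => // ->; by move=> H; rewrite inE H in Hc.
Qed.

Lemma score_in (V : profile C n) i v c : c \in top2 (V i) ->
  score (upd V i v) c <= score V c.
Proof.
move=> Hc; rewrite /score; apply: subset_leq_card; apply/subsetP => j.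
rewrite !inE /upd; case: eqP => [->|//] _; by move: Hc; rewrite inE.
Qed.

Lemma manip_res (t : rel C) (V : profile C n) i v w :
  (forall k, strict_linear (V k)) ->
  R2 t V = Some w -> w \in top2 (V i) -> GS_manipulation t V i v ->
  exists x, [/\ R2 t (upd V i v) = Some x, rank (V i) x = 0, rank (V i) w = 1 & x != w].
Proof.
move=> sl Hw Hwt [_ Hp _]; move: Hp; rewrite Hw.
case E: (R2 t (upd V i v)) => [x|] //= Hxw.
have := rank_lt (sl i) Hxw; move: Hwt; rewrite inE => Hwt Hlt.
exists x; split => //; try lia.
apply/eqP => exw; move: Hxw; rewrite exw.
by case: (sl i) => irr _ _; rewrite (negbTE (irr w)).
Qed.

End Aux.

Theorem mainTheorem10 (C : finType) (n : nat) (t : rel C) (V : profile C n) :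
  strict_linear t ->
  (forall k, strict_linear (V k)) ->
  forall i j : 'I_n,
    type2_manipulator t V i -> type2_manipulator t V j ->
    (forall c : C, rank (V i) c = 0 <-> rank (V j) c = 0) /\
    (forall c : C, rank (V i) c = 1 <-> rank (V j) c = 1) /\
    (forall vi vj, GS_manipulation t V i vi -> GS_manipulation t V j vj ->
       R2 t (upd V i vi) = R2 t (upd V j vj)).
Proof.
move=> slt sl i j [[vi0 Hi0] [w [Hw Hwi]]] [[vj0 Hj0] [w' [Hw' Hwj]]].
move: Hw'; rewrite Hw => -[Ew]; subst w'.
have [a [Ea Ra Rwi Naw]] := manip_res sl Hw Hwi Hi0.
have [b [Eb Rb Rwj Nbw]] := manip_res sl Hw Hwj Hj0.
have r0 : forall (k : 'I_n) x y, rank (V k) x = rank (V k) y -> x = y.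
  by move=> k x y; apply: rank_inj.
have ab : a = b.
  apply/eqP/negP => /negP Nab.
  have Hb_out : b \notin top2 (V i).
    rewrite inE; apply/negP => H.
    have : rank (V i) b <> 0.
      move=> E; have E' : b = a by apply: (r0 i); rewrite E Ra.
      by rewrite E' eqxx in Nab.
    have : rank (V i) b <> 1.
      move=> E; have E' : b = w by apply: (r0 i); rewrite E Rwi.
      by rewrite E' Rwj in Rb.
    lia.
  have Ha_out : a \notin top2 (V j).
    rewrite inE; apply/negP => H.
    have : rank (V j) a <> 0.
      move=> E; have E' : a = b by apply: (r0 j); rewrite E Rb.
      by rewrite E' eqxx in Nab.
    have : rank (V j) a <> 1.
      move=> E; have E' : a = w by apply: (r0 j); rewrite E Rwj.
      by rewrite E' Rwi in Ra.
    lia.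
  have Ha_in : a \in top2 (V i) by rewrite inE Ra.
  have Hb_in : b \in top2 (V j) by rewrite inE Rb.
  have Nba : b != a by rewrite eq_sym.
  have B1 := R2_beats Ea Nba.
  have B2 := R2_beats Eb Nab.
  have s1 := score_in vi0 Ha_in. have s2 := score_out vi0 Hb_out.
  have s3 := score_in vj0 Hb_in. have s4 := score_out vj0 Ha_out.
  move: B1 B2; rewrite /beats.
  case: slt => irr tr _.
  case/orP => [L1|/andP [/eqP L1 T1]]; case/orP => [L2|/andP [/eqP L2 T2]]; try lia.
  by have := tr _ _ _ T1 T2; rewrite (negbTE (irr a)).
subst b.
split; [|split].
- move=> c; split=> H.
  + by rewrite (r0 i c a) ?H ?Ra.
  + by rewrite (r0 j c a) ?H ?Rb.
- move=> c; split=> H.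
  + by rewrite (r0 i c w) ?H ?Rwi.
  + by rewrite (r0 j c w) ?H ?Rwj.
- move=> vi vj Hi Hj.
  have [x [Ex Rx _ _]] := manip_res sl Hw Hwi Hi.
  have [y [Ey Ry _ _]] := manip_res sl Hw Hwj Hj.
  rewrite Ex Ey (r0 i x a) ?Rx ?Ra // (r0 j y a) ?Ry ?Rb //.
Qed.
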